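(* Let $g:[0,1]\to[0,\infty)$, let $G_0(X^n,P)=\sum_{x\in\mathcal{X}}g(p_x)\,I(F_x(X^n)=0)$ and $L_{G_0}(\lambda)=\log E\big[e^{\lambda(G_0-E[G_0])}\big]$. Then for all $\lambda>0$, $$L_{G_0}(\lambda)\le\sum_{r=2}^{\infty}\frac{\lambda^r}{r!}\,u^*_r(n,g),\qquad u^*_r(n,g)=\max_{0<p<1}g(p)^r(1-p)^n\frac{1-(1-p)^n}{p}.$$
   Context: $P$ is a discrete probability distribution on a countable alphabet $\mathcal{X}$, $p_x=P(x)$, and $X^n=(X_1,\ldots,X_n)$ are i.i.d. samples from $P$. $F_x(X^n)=\sum_{i=1}^n I(X_i=x)$ is the number of occurrences of $x$ in $X^n$, and $I(\cdot)$ is the indicator. *)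

(* Defs.v *)
From HB Require Import structures.
From mathcomp Require Import all_boot all_order all_algebra.
From mathcomp Require Import all_classical all_reals all_analysis.
Set Implicit Arguments. Unset Strict Implicit. Unset Printing Implicit Defensive.
Import Order.TTheory GRing.Theory Num.Theory.
Local Open Scope classical_set_scope.
Local Open Scope ring_scope.

Section Defs.
Variables (R : realType) (T : countType).

Definition seqprob (p : T -> R) (n : nat) (s : n.-tuple T) : R :=
  \prod_(i <- s) p i.

Definition occ (n : nat) (s : n.-tuple T) (x : T) : nat := count_mem x s.

Definition G0 (g : R -> R) (p : T -> R) (n : nat) (s : n.-tuple T) : \bar R :=
  (\esum_(x in setT) (g (p x) * (occ s x == 0%N)%:R)%:E)%E.

(* expectation E[f(X^n)] of a [0,+oo]-valued (or a.s. finite) statistic *)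
Definition Exp (p : T -> R) (n : nat) (f : n.-tuple T -> \bar R) : \bar R :=
  (\esum_(s in setT) (seqprob p s)%:E * f s)%E.

Definition LG0 (g : R -> R) (p : T -> R) (n : nat) (lam : R) : \bar R :=
  lne (Exp p (fun s => expeR (lam%:E * (@G0 g p n s - Exp p (@G0 g p n)))%E)).

Definition ustar (r n : nat) (g : R -> R) : \bar R :=
  ereal_sup [set ((g q) ^+ r * (1 - q) ^+ n * (1 - (1 - q) ^+ n) / q)%:E
            | q in `]0, 1[%classic].
End Defs.
Arguments G0 {R T} g p n s.

(* Main.v *)
Require Import Defs.
From HB Require Import structures.
From mathcomp Require Import all_boot all_order all_algebra.
From mathcomp Require Import all_classical all_reals all_analysis.
From mathcomp Require Import ring lra.
Import Order.TTheory GRing.Theory Num.Theory.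
Import numFieldNormedType.Exports.
Local Open Scope classical_set_scope.
Local Open Scope ring_scope.


Section series_ineq.
Context {R : realType}.

Lemma expR_cvg (t : R) : series (exp_coeff t) @ \oo --> expR t.
Proof. exact: is_cvg_series_exp_coeff. Qed.

Lemma bracket_le1 (mu : R) j : 0 <= mu <= 1 ->
  (1 - mu) ^+ j.+1 + (-1) ^+ j * mu ^+ j.+1 <= 1.
Proof.
move=> /andP[m0 m1].
have h1 : (1 - mu) ^+ j.+1 <= 1 - mu.
  rewrite exprS -[leRHS]mulr1 ler_wpM2l ?subr_ge0// exprn_ile1// ?subr_ge0//.
  by rewrite lerBlDr lerDl.
have h2 : (-1) ^+ j * mu ^+ j.+1 <= mu.
  have h3 : mu ^+ j.+1 <= mu.
    by rewrite exprS -[leRHS]mulr1 ler_wpM2l// exprn_ile1.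
  have h4 : 0 <= mu ^+ j.+1 by rewrite exprn_ge0.
  rewrite -signr_odd; case: (odd j); rewrite ?expr1 ?expr0; lra.
lra.
Qed.

Lemma dterm_le0 (t mu : R) k : 0 <= t -> 0 <= mu <= 1 ->
  mu * exp_coeff (t * (1 - mu)) k.+2 + (1 - mu) * exp_coeff (- (t * mu)) k.+2
  - mu * (1 - mu) * exp_coeff t k.+2 <= 0.
Proof.
move=> t0 hm; have /andP[m0 m1] := hm.
rewrite /exp_coeff /=.
set j := k.+2.
have -> : mu * ((t * (1 - mu)) ^+ j / j`!%:R) + (1 - mu) * ((- (t * mu)) ^+ j / j`!%:R)
  - mu * (1 - mu) * (t ^+ j / j`!%:R) =
  (t ^+ j / j`!%:R) * (mu * (1 - mu)) *
  ((1 - mu) ^+ k.+1 + (-1) ^+ k * mu ^+ k.+1 - 1).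
  set fi := (j`!%:R)^-1; rewrite /j [(- (t * mu)) ^+ _]exprNn !exprMn !exprS; ring.
rewrite mulr_ge0_le0 //.
  apply: mulr_ge0; last by apply: mulr_ge0; lra.
  apply: divr_ge0; [exact: exprn_ge0|exact: ler0n].
by have := @bracket_le1 mu k hm; lra.
Qed.

Lemma key_ineq (t mu : R) : 0 <= t -> 0 <= mu <= 1 ->
  mu * expR (t * (1 - mu)) + (1 - mu) * expR (- (t * mu)) - mu * (1 - mu) * expR t
  <= 1 - mu * (1 - mu) * (1 + t).
Proof.
move=> t0 hm; have /andP[m0 m1] := hm.
pose u N := mu * series (exp_coeff (t * (1 - mu))) N
   + (1 - mu) * series (exp_coeff (- (t * mu))) N
   - mu * (1 - mu) * series (exp_coeff t) N.
have cu : u N @[N --> \oo] --> mu * expR (t * (1 - mu)) + (1 - mu) * expR (- (t * mu))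
   - mu * (1 - mu) * expR t.
  apply: cvgB; first apply: cvgD.
  - exact: cvgMl_tmp (expR_cvg _).
  - exact: cvgMl_tmp (expR_cvg _).
  - exact: cvgMl_tmp (expR_cvg _).
rewrite -(cvg_lim _ cu) //; apply: limr_le; first by apply/cvg_ex; eexists; exact: cu.
exists 2%N => // N /= N2.
case: N N2 => [|[|M]] // _.
rewrite /u /series /= !big_nat_recl //.
have tail : mu * \sum_(0 <= k < M) exp_coeff (t * (1 - mu)) k.+2
  + (1 - mu) * \sum_(0 <= k < M) exp_coeff (- (t * mu)) k.+2
  - mu * (1 - mu) * \sum_(0 <= k < M) exp_coeff t k.+2 <= 0.
  rewrite !mulr_sumr -big_split -sumrB /=; apply: sumr_le0 => k _.
  exact: dterm_le0.
move: tail; rewrite /exp_coeff /= !expr0 !expr1 !divr1.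
lra.
Qed.

Lemma ln_le_sub1 (y : R) : 0 < y -> ln y <= y - 1.
Proof.
move=> y0; have h : y <= expR (y - 1) by have := expR_ge1Dx (y - 1); rewrite addrC subrK.
by rewrite -[leRHS]expRK ler_ln ?posrE ?expR_gt0.
Qed.

Lemma log_ineq (t mu : R) : 0 <= t -> 0 <= mu <= 1 ->
  ln (1 + (expR t - 1) * mu) - t * mu <= mu * (1 - mu) * (expR t - 1 - t).
Proof.
move=> t0 hm; have /andP[m0 m1] := hm.
have et : 1 <= expR t by rewrite -expR0 ler_expR.
have Y0 : 0 < 1 + (expR t - 1) * mu.
  by apply: (lt_le_trans ltr01); rewrite lerDl mulr_ge0// subr_ge0.
have h := ln_le_sub1 _ (mulr_gt0 Y0 (expR_gt0 (- (t * mu)))).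
rewrite lnM ?posrE ?expR_gt0// expRK in h.
have k := key_ineq _ _ t0 hm.
have e1 : expR (t * (1 - mu)) = expR t * expR (- (t * mu)).
  by rewrite -expRD mulrBr mulr1.
rewrite e1 in k.
have : (1 + (expR t - 1) * mu) * expR (- (t * mu)) =
   mu * (expR t * expR (- (t * mu))) + (1 - mu) * expR (- (t * mu)) by ring.
lra.
Qed.

End series_ineq.

Section final_bound.
Context {R : realType} {T : countType} (p : T -> R) (g : R -> R) (n : nat).
Hypothesis p01 : forall x, (0 <= p x <= 1)%R.
Hypothesis g_ge0 : forall q : R, (0 <= q <= 1)%R -> (0 <= g q)%R.

Lemma cvg_sum_seq (J : Type) (r : seq J) (f : J -> nat -> R) (l : J -> R) :
  (forall j, f j k @[k --> \oo] --> l j) ->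
  (\sum_(j <- r) f j k) @[k --> \oo] --> \sum_(j <- r) l j.
Proof.
move=> h; elim: r => [|j r IH].
  rewrite big_nil; under eq_fun do rewrite big_nil; exact: cvg_cst.
rewrite big_cons; under eq_fun do rewrite big_cons.
exact: cvgD.
Qed.

Lemma ustar_ge0 r : (0 <= ustar r n g)%E.
Proof.
apply: (le_trans _ (ereal_sup_ubound _)); last first.
  exists (1/2)%R; first by rewrite /= in_itv /=; apply/andP; split; lra.
  reflexivity.
have h1 : ((0:R) <= 1/2)%R by lra.
have h2 : ((1:R)/2 <= 1)%R by lra.
rewrite lee_fin; apply: divr_ge0; last lra.
apply: mulr_ge0; last by rewrite subr_ge0 exprn_ile1; lra.
apply: mulr_ge0; first by apply: exprn_ge0; apply: g_ge0; rewrite h1 h2.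
by apply: exprn_ge0; lra.
Qed.

Lemma ustar_bound r x :
  (((g (p x)) ^+ r * ((1 - p x) ^+ n * (1 - (1 - p x) ^+ n)))%:E <= (p x)%:E * ustar r n g)%E.
Proof.
have /andP[p0 p1] := p01 x.
have u0 := ustar_ge0 r.
have [px0|px0] := eqVneq (p x) 0.
  by rewrite px0 subr0 expr1n subrr !mulr0 mul0e.
have [px1|px1] := eqVneq (p x) 1.
  rewrite px1 subrr mul1e.
  have -> : ((0:R) ^+ n * (1 - 0 ^+ n) = 0)%R.
    by case: (n) => [|m]; rewrite ?expr0 ?subrr ?mulr0 // expr0n mul0r.
  by rewrite mulr0.
have q01 : `]0, 1[%classic (p x).
  by rewrite /= in_itv /= !lt_neqAle p0 p1 px1 eq_sym px0.
apply: (le_trans _ (lee_wpmul2l _ (ereal_sup_ubound _))); last 2 first.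
- by rewrite lee_fin.
- by exists (p x).
rewrite -EFinM lee_fin le_eqVlt; apply/orP; left; apply/eqP.
field; exact: px0.
Qed.

Lemma final_bound (lam : R) (F : seq T) : (0 < lam)%R -> (\sum_(x <- F) p x <= 1)%R ->
  ((\sum_(x <- F) ((1 - p x) ^+ n * (1 - (1 - p x) ^+ n)) *
      (expR (lam * g (p x)) - 1 - lam * g (p x)))%:E
   <= \sum_(2 <= r <oo) ((lam ^+ r / (r`!)%:R)%:E * ustar r n g))%E.
Proof.
move=> lam0 sF.
set w := fun x => ((1 - p x) ^+ n * (1 - (1 - p x) ^+ n))%R.
set t := fun x => (lam * g (p x))%R.
have w0 x : (0 <= w x)%R.
  have /andP[p0 p1] := p01 x.
  rewrite /w mulr_ge0 ?exprn_ge0 ?subr_ge0 ?exprn_ile1 //; lra.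
have t0 x : (0 <= t x)%R.
  by rewrite /t mulr_ge0 ?g_ge0 ?p01 //; apply: ltW.
set B := (\sum_(2 <= r <oo) _)%E.
have B0 : (0 <= B)%E.
  by apply: nneseries_ge0 => r _ _; rewrite mule_ge0 ?ustar_ge0 // lee_fin divr_ge0 // exprn_ge0 // ltW.
set v := fun N => (\sum_(x <- F) w x * (series (exp_coeff (t x)) N - 1 - t x))%R.
have cv : v N @[N --> \oo] --> (\sum_(x <- F) w x * (expR (t x) - 1 - t x))%R.
  apply: cvg_sum_seq => x; apply: cvgMl_tmp; apply: cvgB; first apply: cvgB.
  - exact: expR_cvg.
  - exact: cvg_cst.
  - exact: cvg_cst.
have vB N : (2 <= N)%N -> ((v N)%:E <= B)%E.
  move=> N2; apply: (le_trans _ (nneseries_lim_ge N _)); last first.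
    by move=> r _ _; rewrite mule_ge0 ?ustar_ge0 // lee_fin divr_ge0 // exprn_ge0 // ltW.
  have -> : v N = (\sum_(2 <= k < N) lam ^+ k / k`!%:R * \sum_(x <- F) g (p x) ^+ k * w x)%R.
    have N0 : (0 < N)%N by apply: leq_trans N2.
    have N1 : (1 < N)%N by apply: leq_trans N2.
    have e x : (series (exp_coeff (t x)) N - 1 - t x = \sum_(2 <= k < N) exp_coeff (t x) k)%R.
      rewrite /series /= (big_ltn N0) (big_ltn N1) /exp_coeff /=.
      rewrite expr0 expr1 !divr1; ring.
    rewrite /v; under eq_bigr => x _ do rewrite e mulr_sumr.
    rewrite exchange_big /=; apply: eq_bigr => k _; rewrite mulr_sumr.
    apply: eq_bigr => x _; rewrite /exp_coeff /= /t exprMn; ring.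
  rewrite -sumEFin; apply: lee_sum => k _.
  rewrite EFinM; apply: lee_wpmul2l.
    by rewrite lee_fin divr_ge0 // exprn_ge0 // ltW.
  rewrite -sumEFin.
  apply: (@le_trans _ _ (\sum_(x <- F) (p x)%:E * ustar k n g)%E).
    by apply: lee_sum => x _; exact: ustar_bound.
  rewrite -ge0_sume_distrl; last by move=> x _; rewrite lee_fin; have /andP[] := p01 x.
  by rewrite sumEFin gee_pMl // ?ustar_ge0 // lee_fin.
have [->|Bfin] := eqVneq B +oo%E; first by rewrite leey.
have Bf : B \is a fin_num by rewrite ge0_fin_numE // ltey.
rewrite -(fineK Bf) lee_fin -(cvg_lim _ cv) //.
apply: limr_le; first by apply/cvg_ex; eexists; exact: cv.
exists 2%N => // N /= N2; rewrite -lee_fin fineK //; exact: vB.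
Qed.

End final_bound.

Local Open Scope ereal_scope.

Section esum_lemmas.
Context {R : realType} {I : choiceType}.

Lemma esumZl (S : set I) (a : R) (f : I -> \bar R) :
  (0 <= a)%R -> (forall i, S i -> 0 <= f i) ->
  \esum_(i in S) (a%:E * f i) = a%:E * \esum_(i in S) f i.
Proof.
move=> a0 f0; rewrite /esum -ereal_supZl //; last first.
  by apply/set0P; exists 0; exists set0; [exact: fsets_set0|rewrite fsbig_set0].
congr ereal_sup; apply/seteqP; split => x /=.
- move=> [X XS <-]; exists (\sum_(i \in X) f i); first by exists X.
  case: XS => finX XS; rewrite !fsbig_finite// big_seq [in RHS]big_seq.
  rewrite ge0_sume_distrr// => i; rewrite in_fset_set// inE => /XS; exact: f0.
- move=> [y] [X XS <-] <-; exists X => //.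
  case: XS => finX XS; rewrite !fsbig_finite// big_seq [in RHS]big_seq.
  rewrite ge0_sume_distrr// => i; rewrite in_fset_set// inE => /XS; exact: f0.
Qed.

Lemma esum_pt (f : I -> \bar R) (z : I) : (forall i, 0 <= f i) ->
  \esum_(i in setT) f i = f z + \esum_(i in setT) (if i == z then 0 else f i).
Proof.
move=> f0; rewrite (esumID [set z]) ?setTI ?esum_set1//.
congr (_ + _); rewrite esum_mkcond; apply: eq_esum => i _.
have -> : (i \in [set~ z]) = (i != z).
  by apply/idP/idP; rewrite inE /=; move/eqP.
by case: (i == z).
Qed.

Lemma esum_seq (f : I -> \bar R) (F : seq I) : uniq F -> (forall i, 0 <= f i) ->
  \esum_(i in setT) f i =
  \sum_(x <- F) f x + \esum_(i in setT) (if i \in F then 0 else f i).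
Proof.
move=> uF f0; elim: F uF => [|z F IH] /=.
  by rewrite big_nil add0e.
move=> /andP[zF uF]; rewrite IH//.
rewrite (esum_pt _ z); last by move=> i; case: ifP.
rewrite (negbTE zF) big_cons addeA [(\sum_(x <- F) f x) + f z]addeC.
congr (_ + _); apply: eq_esum => i _.
by rewrite inE; case: (i == z).
Qed.

End esum_lemmas.

Section tuple_lemmas.
Context {R : realType} {T : countType}.

Lemma esum_tuple_cons n (f : n.+1.-tuple T -> \bar R) : (forall s, 0 <= f s) ->
  \esum_(s in setT) f s = \esum_(y in setT) \esum_(s in setT) f (cons_tuple y s).
Proof.
move=> f0; rewrite esum_esum //.
rewrite (reindex_esum (setT `*`` (fun=> setT)) setT
   (fun k : T * n.-tuple T => cons_tuple k.1 k.2)) //.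
split.
- by move=> k.
- move=> [y s] [y' s'] _ _ /(congr1 val) /= [-> /val_inj ->] //.
- move=> t _; case/tupleP: t => y s; by exists (y, s).
Qed.

Lemma esum_tuple0 (f : 0.-tuple T -> \bar R) : (forall s, 0 <= f s) ->
  \esum_(s in setT) f s = f [tuple].
Proof.
move=> f0; rewrite (_ : setT = [set [tuple]]) ?esum_set1//.
apply/seteqP; split => s // _; apply: val_inj; by case: s => -[].
Qed.

End tuple_lemmas.

Section prob.
Context {R : realType} {T : countType} (p : T -> R).
Hypothesis p_ge0 : forall x, (0 <= p x)%R.
Hypothesis p_sum1 : \esum_(x in setT) (p x)%:E = 1.

Lemma p_le1 x : (p x <= 1)%R.
Proof.
have := p_sum1; rewrite (esum_pt _ x); last by move=> i; rewrite lee_fin.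
move=> h; rewrite -lee_fin -h leeDl// esum_ge0// => i _.
by case: ifP => //; rewrite lee_fin.
Qed.

Lemma p_seq (F : seq T) : uniq F ->
  \esum_(x in setT) (if x \in F then 0 else (p x)%:E) = (1 - \sum_(x <- F) p x)%:E.
Proof.
move=> uF; have := p_sum1; rewrite (esum_seq _ _ uF); last by move=> i; rewrite lee_fin.
rewrite sumEFin.
have : 0 <= \esum_(x in setT) (if x \in F then 0 else (p x)%:E).
  by apply: esum_ge0 => i _; case: ifP => //; rewrite lee_fin.
case: (\esum_(x in setT) _) => [r| |] //= _.
by move=> [] <-; rewrite addrC addrK.
Qed.

Lemma natr_andb (a b : bool) : ((a && b)%:R = a%:R * b%:R :> R)%R.
Proof. by case: a; case: b; rewrite /= ?mulr0 ?mulr1. Qed.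

Lemma seqprob_cons n y (s : n.-tuple T) :
  seqprob p (cons_tuple y s) = (p y * seqprob p s)%R.
Proof. by rewrite /seqprob big_cons. Qed.

Lemma seqprob_ge0 n (s : n.-tuple T) : (0 <= seqprob p s)%R.
Proof. by rewrite /seqprob; apply: prodr_ge0 => i _. Qed.

Lemma occ_cons n y (s : n.-tuple T) x :
  (occ (cons_tuple y s) x == 0%N) = (y != x) && (occ s x == 0%N).
Proof. by rewrite /occ /= addn_eq0 eqb0. Qed.

Lemma prob_avoid n x :
  \esum_(s in [set: n.-tuple T]) (seqprob p s * (occ s x == 0%N)%:R)%:E = ((1 - p x) ^+ n)%:E.
Proof.
elim: n => [|n IH].
  rewrite esum_tuple0; last by move=> s; rewrite lee_fin mulr_ge0 ?seqprob_ge0.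
  by rewrite /seqprob /occ /= big_nil expr0 mulr1.
rewrite esum_tuple_cons; last by move=> s; rewrite lee_fin mulr_ge0 ?seqprob_ge0.
under eq_esum => y _.
  under eq_esum => s _ do rewrite seqprob_cons occ_cons natr_andb mulrACA EFinM.

  rewrite esumZl; last 2 first.
  - by rewrite mulr_ge0.
  - by move=> s _; rewrite lee_fin mulr_ge0 ?seqprob_ge0.
  rewrite IH muleC.
  over.
rewrite /= esumZl; last 2 first.
- by rewrite exprn_ge0// subr_ge0 p_le1.
- by move=> y _; rewrite lee_fin mulr_ge0.
rewrite exprSr EFinM; congr (_ * _).
have := p_seq [:: x] erefl; rewrite big_seq1 => <-.
apply: eq_esum => y _; rewrite inE eq_sym.
by case: (x == y); rewrite ?mulr0 ?mulr1.
Qed.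

End prob.

Section finite_ineq.
Context {R : realType} {T : countType}.
Local Open Scope ring_scope.

Lemma weier_step (F : seq T) (a q : T -> R) : uniq F ->
  (forall x, 0 <= a x) -> (forall x, 0 <= q x <= 1) ->
  \sum_(y <- F) q y * \prod_(x <- F) (1 + (if x == y then 0 else a x))
  + (1 - \sum_(y <- F) q y) * \prod_(x <- F) (1 + a x)
  <= \prod_(x <- F) (1 + a x * (1 - q x)).
Proof.
move=> + a0 q01; elim: F => [|z F IH] /=.
  by rewrite !big_nil subr0 mulr1 add0r.
move=> /andP[zF uF]; have {}IH := IH uF.
set P := \prod_(x <- F) (1 + a x).
set Rf := \prod_(x <- F) (1 + a x * (1 - q x)).
set S := \sum_(y <- F) q y * \prod_(x <- F) (1 + (if x == y then 0 else a x)).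
have RP : Rf <= P.
  apply: ler_prod => x _; have := q01 x; have := a0 x; move=> ? /andP[? ?].
  by apply/andP; split; nra.
have R0 : 0 <= Rf.
  apply: prodr_ge0 => x _; have := q01 x; have := a0 x; move=> ? /andP[? ?]; nra.
have Kz : \prod_(x <- z :: F) (1 + (if x == z then 0 else a x)) = P.
  rewrite big_cons eqxx addr0 mul1r /P big_seq [RHS]big_seq.
  apply: eq_bigr => x xF; suff -> : (x == z) = false by [].
  by apply/negbTE; apply: contraNneq zF => <-.
have Ky : \sum_(y <- F) q y * \prod_(x <- z :: F) (1 + (if x == y then 0 else a x))
    = (1 + a z) * S.
  rewrite /S big_distrr big_seq [RHS]big_seq; apply: eq_bigr => y yF /=.
  rewrite big_cons; suff -> : (z == y) = false by rewrite mulrCA.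
  by apply/negbTE; apply: contraNneq zF => ->.
rewrite big_cons Kz Ky !big_cons -/P -/Rf.
have := q01 z; have := a0 z; move=> az /andP[qz0 qz1].
have h1 : 0 <= a z * q z * (P - Rf) by rewrite mulr_ge0 ?mulr_ge0 // subr_ge0.
have h2 : 0 <= (1 + a z) * (Rf - (S + (1 - \sum_(y <- F) q y) * P)).
  by rewrite mulr_ge0 // ?subr_ge0 // addr_ge0.
nra.
Qed.

End finite_ineq.

Section NA.
Context {R : realType} {T : countType} (p : T -> R).
Hypothesis p_ge0 : forall x, (0 <= p x)%R.
Hypothesis p_sum1 : \esum_(x in setT) (p x)%:E = 1.

Lemma NA n (c : T -> R) (F : seq T) : uniq F -> (forall x, (0 <= c x)%R) ->
  \esum_(s in [set: n.-tuple T])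
     (seqprob p s * \prod_(x <- F) (1 + c x * (occ s x == 0%N)%:R))%:E
  <= (\prod_(x <- F) (1 + c x * (1 - p x) ^+ n))%:E.
Proof.
move=> uF; have ple1 := @p_le1 _ _ p p_ge0 p_sum1.
have sp0 := @seqprob_ge0 _ _ p p_ge0.
elim: n c => [|n IH] c c0.
  rewrite esum_tuple0; last first.
    move=> s; rewrite lee_fin mulr_ge0 ?sp0// prodr_ge0// => x _.
    by rewrite addr_ge0// mulr_ge0.
  by rewrite /seqprob /occ /= big_nil mul1r lexx.
rewrite esum_tuple_cons; last first.
  move=> s; rewrite lee_fin mulr_ge0 ?sp0// prodr_ge0// => x _.
  by rewrite addr_ge0// mulr_ge0.
set mu := fun x => ((1 - p x) ^+ n)%R.
have mu0 x : (0 <= mu x)%R by rewrite exprn_ge0// subr_ge0 ple1.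
pose K y := (\prod_(x <- F) (1 + c x * (y != x)%:R * mu x))%R.
have K0 y : (0 <= K y)%R.
  by rewrite prodr_ge0// => x _; rewrite addr_ge0// !mulr_ge0.
apply: (@le_trans _ _ (\esum_(y in setT) (p y * K y)%:E)).
  apply: le_esum => y _.
  under eq_esum => s _ do rewrite seqprob_cons -mulrA EFinM.
  rewrite esumZl//; last first.
    move=> s _; rewrite lee_fin mulr_ge0 ?sp0// prodr_ge0// => x _.
    by rewrite addr_ge0// mulr_ge0.
  rewrite EFinM lee_wpmul2l// ?lee_fin//.
  have c'0 x : (0 <= c x * (y != x)%:R)%R by rewrite mulr_ge0.
  have := IH _ c'0; apply: le_trans; rewrite le_eqVlt; apply/orP; left; apply/eqP.
  apply: eq_esum => s _; congr (_ * _)%:E; apply: eq_bigr => x _.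
  by rewrite occ_cons natr_andb mulrA.
rewrite (esum_seq _ _ uF); last by move=> y; rewrite lee_fin mulr_ge0.
rewrite (_ : \esum_(i in setT) _ =
   (\prod_(x <- F) (1 + c x * mu x))%:E *
   \esum_(i in setT) (if i \in F then 0 else (p i)%:E)); last first.
  rewrite -esumZl; last 2 first.
  - by rewrite prodr_ge0// => x _; rewrite addr_ge0// mulr_ge0.
  - by move=> y _; case: ifP => //; rewrite lee_fin.
  apply: eq_esum => y _; case: ifPn => yF; first by rewrite mule0.
  rewrite -EFinM mulrC /K; congr (_ * _)%:E; rewrite big_seq [RHS]big_seq.
  apply: eq_bigr => x xF; suff -> : (y != x) by rewrite mulr1.
  by apply: contraNneq yF => ->.
rewrite (@p_seq _ _ p p_ge0 p_sum1)// sumEFin -EFinM -EFinD lee_fin.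
have := @weier_step R T F (fun x => (c x * mu x)%R) p uF.
have q01 x : (0 <= p x <= 1)%R by rewrite p_ge0 ple1.
move=> /(_ (fun x => mulr_ge0 (c0 x) (mu0 x)) q01).
move=> h.
rewrite (_ : (\prod_(x <- F) (1 + c x * (1 - p x) ^+ n.+1))%R = \prod_(x <- F) (1 + c x * mu x * (1 - p x)))%R; last first.
  by apply: eq_bigr => x _; rewrite /mu exprSr mulrA.
apply: (le_trans _ h); rewrite le_eqVlt; apply/orP; left; apply/eqP.
congr (_ + _)%R; last by rewrite mulrC.
apply: eq_bigr => y _; congr (_ * _)%R; rewrite /K.
apply: eq_bigr => x _; have [->|nxy] := eqVneq x y; by rewrite /= ?mulr0 ?mul0r ?addr0 ?mulr1.
Qed.

End NA.

Local Close Scope ereal_scope.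

Theorem lemma5 (R : realType) (T : countType) (p : T -> R) (g : R -> R) (n : nat)
  (p_ge0 : forall x, 0 <= p x)
  (p_sum1 : (\esum_(x in setT) (p x)%:E = 1)%E)
  (g_ge0 : forall q : R, 0 <= q <= 1 -> 0 <= g q)
  (EG0_fin : Exp p (G0 g p n) \is a fin_num)
  (lam : R) (lam_gt0 : 0 < lam) :
  (LG0 g p n lam <=
     \sum_(2 <= r <oo) ((lam ^+ r / (r`!)%:R)%:E * ustar r n g))%E.
Proof.
have p01 x : 0 <= p x <= 1 by rewrite p_ge0 (@p_le1 _ _ p p_ge0 p_sum1).
have gx0 x : 0 <= g (p x) by apply: g_ge0.
have sp0 := @seqprob_ge0 _ _ p p_ge0.
set m := Exp p (G0 g p n).
set B := (\sum_(2 <= r <oo) _)%E.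
have G0E (s : n.-tuple T) (F : seq T) : uniq F ->
  G0 g p n s = ((\sum_(x <- F) g (p x) * (occ s x == 0%N)%:R)%:E
    + \esum_(x in setT) (if x \in F then 0 else (g (p x) * (occ s x == 0%N)%:R)%:E))%E.
  move=> uF; rewrite /G0 (esum_seq _ _ uF) ?sumEFin // => x.
  by rewrite lee_fin mulr_ge0.
have tail0 (s : n.-tuple T) (F : seq T) :
  (0 <= \esum_(x in setT) (if x \in F then 0 else (g (p x) * (occ s x == 0%N)%:R)%:E))%E.
  by apply: esum_ge0 => x _; case: ifP => // _; rewrite lee_fin mulr_ge0.
have G00 (s : n.-tuple T) : (0 <= G0 g p n s)%E.
  by apply: esum_ge0 => x _; rewrite lee_fin mulr_ge0.
have m0 : (0 <= m)%E.
  by apply: esum_ge0 => s _; rewrite mule_ge0 // lee_fin.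
have mF (F : seq T) : uniq F ->
    ((\sum_(x <- F) g (p x) * (1 - p x) ^+ n)%:E <= m)%E.
  move=> uF.
  have step : (\esum_(s in [set: n.-tuple T]) ((seqprob p s)%:E *
       (\sum_(x <- F) g (p x) * (occ s x == 0%N)%:R)%:E))%E =
       (\sum_(x <- F) g (p x) * (1 - p x) ^+ n)%:E.
    transitivity (\esum_(s in [set: n.-tuple T]) \sum_(x <- F)
       ((g (p x))%:E * (seqprob p s * (occ s x == 0%N)%:R)%:E))%E.
      apply: eq_esum => s _; rewrite -EFinM mulr_sumr -sumEFin.
      by apply: eq_bigr => x _; rewrite -EFinM mulrCA mulrA.
    rewrite esum_sum; last first.
      by move=> s x _ _; rewrite -EFinM lee_fin !mulr_ge0.
    rewrite -sumEFin; apply: eq_bigr => x _.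
    rewrite esumZl //; last by move=> s _; rewrite lee_fin mulr_ge0.
    by rewrite (@prob_avoid _ _ p p_ge0 p_sum1) -EFinM.
  rewrite -step /m /Exp; apply: le_esum => s _; apply: lee_wpmul2l; first by rewrite lee_fin.
  by rewrite (G0E s F uF) leeDl.
have mfin := EG0_fin; rewrite -/m in mfin.
set A := (\esum_(x in setT) (g (p x))%:E)%E.
have [x0 px0] : exists x, 0 < p x.
  apply: contrapT => /forallNP h; move: p_sum1; rewrite esum1.
    by move=> /eqP; rewrite eq_sym onee_eq0.
  move=> x _; have := h x; rewrite lt_neqAle p_ge0 andbT => /negP; rewrite negbK.
  by move=> /eqP <-.
pose s0 := nseq_tuple n x0.
have Ps0 : 0 < seqprob p s0.
  rewrite /seqprob /= big_seq; apply: prodr_gt0 => i.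
  by rewrite mem_nseq => /andP[_ /eqP ->].
have G0s0 : (G0 g p n s0 < +oo)%E.
  have h : ((seqprob p s0)%:E * G0 g p n s0 <= m)%E.
    apply: esum_ge; exists [set s0]; first by split; [exact: finite_set1|].
    by rewrite fsbig_set1.
  rewrite ltey; apply/negP => /eqP e; move: h; rewrite e gt0_muley ?lte_fin //.
  by rewrite leye_eq => /eqP mE; rewrite mE in mfin.
have Afin : A \is a fin_num.
  rewrite ge0_fin_numE; last by apply: esum_ge0 => x _; rewrite lee_fin.
  rewrite /A (esum_pt _ x0); last by move=> x; rewrite lee_fin.
  apply: (@le_lt_trans _ _ ((g (p x0))%:E + G0 g p n s0)%E).
    apply: leeD2l; apply: le_esum => x _; case: eqVneq => [_|xx0]; first by rewrite lee_fin mulr_ge0.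
    by rewrite /occ count_nseq /= [x0 == x]eq_sym (negPf xx0) mul0n /= mulr1.
  have G0f : G0 g p n s0 \is a fin_num by rewrite ge0_fin_numE.
  by rewrite -(fineK G0f) -EFinD ltry.
have p_sum_le (F : seq T) : uniq F -> \sum_(x <- F) p x <= 1.
  move=> uF; have := @p_seq _ _ p p_ge0 p_sum1 F uF => h.
  have : (0 <= (1 - \sum_(x <- F) p x)%:E)%E.
    by rewrite -h; apply: esum_ge0 => x _; case: ifP => // _; rewrite lee_fin.
  by rewrite lee_fin subr_ge0.
apply/lee_addgt0Pr => e e0.
set eps := e / lam.
have eps0 : 0 < eps by rewrite divr_gt0.
have : (A - eps%:E < A)%E.
  by rewrite -(fineK Afin) -EFinB lte_fin; lra.
rewrite {2}/A /esum => /ereal_sup_gt [_ [X [finX _] <-] AX].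
rewrite fsbig_finite // in AX.
pose Fs : seq T := finmap.enum_fset (fset_set X).
have uF : uniq Fs := finmap.fset_uniq _.
rewrite -/Fs sumEFin in AX.
set tl := (\esum_(x in setT) (if x \in Fs then 0 else (g (p x))%:E))%E.
have Atl : A = ((\sum_(x <- Fs) g (p x))%:E + tl)%E.
  by rewrite /A (esum_seq _ _ uF) ?sumEFin // => x; rewrite lee_fin.
have tl0 : (0 <= tl)%E by apply: esum_ge0 => x _; case: ifP => // _; rewrite lee_fin.
have tlfin : tl \is a fin_num.
  rewrite ge0_fin_numE //; apply: (@le_lt_trans _ _ A); last by rewrite -(fineK Afin) ltry.
  by rewrite Atl leeDr // lee_fin sumr_ge0.
set t := fine tl.
have tle : t <= eps.
  move: AX; rewrite Atl -(fineK tlfin) -EFinN -!EFinD lte_fin -/t; lra.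
pose GF (s : n.-tuple T) := \sum_(x <- Fs) g (p x) * (occ s x == 0%N)%:R.
have G0le (s : n.-tuple T) : (G0 g p n s <= (GF s + t)%:E)%E.
  rewrite (G0E s Fs uF) EFinD /t fineK //; apply: leeD2l; apply: le_esum => x _.
  case: ifP => // _; rewrite lee_fin ler_piMr //.
  by case: (_ == _).
set M := fine m.
have mM : m = M%:E by rewrite /M fineK.
set c := fun x => expR (lam * g (p x)) - 1.
have c0 x : 0 <= c x.
  by rewrite /c subr_ge0 -expR0 ler_expR mulr_ge0 // ltW.
set C := expR (lam * (t - M)) * \prod_(x <- Fs) (1 + c x * (1 - p x) ^+ n).
have Exp_le : (Exp p (fun s => expeR (lam%:E * (G0 g p n s - m))) <= C%:E)%E.
  apply: (@le_trans _ _ (\esum_(s in [set: n.-tuple T]) ((expR (lam * (t - M)))%:E *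
     (seqprob p s * \prod_(x <- Fs) (1 + c x * (occ s x == 0%N)%:R))%:E))%E).
    apply: le_esum => s _.
    rewrite EFinM muleCA; apply: lee_wpmul2l; first by rewrite lee_fin.
    apply: (@le_trans _ _ (expeR (lam * (GF s + t - M))%:E)).
      rewrite lee_expeR mM EFinM EFinB; apply: lee_wpmul2l; first by rewrite lee_fin ltW.
      exact: leeD2r.
    rewrite /= lee_fin le_eqVlt; apply/orP; left; apply/eqP.
    rewrite (_ : lam * (GF s + t - M) = lam * (t - M) + \sum_(x <- Fs) lam * (g (p x) * (occ s x == 0%N)%:R)); last first.
      by rewrite /GF -mulr_sumr; ring.
    rewrite expRD expR_sum; congr (_ * _); apply: eq_bigr => x _.
    by rewrite /c; case: (_ == _); rewrite /= ?mulr1 ?mulr0 ?expR0 ?addr0 // addrC subrK.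
  rewrite esumZl //; last by move=> s _; rewrite lee_fin mulr_ge0 // prodr_ge0 // => x _; rewrite addr_ge0 // mulr_ge0.
  rewrite /C EFinM; apply: lee_wpmul2l; first by rewrite lee_fin.
  exact: (@NA _ _ p p_ge0 p_sum1 n c Fs uF c0).
have ExpE0 : (0 <= Exp p (fun s => expeR (lam%:E * (G0 g p n s - m))))%E.
  by apply: esum_ge0 => s _; rewrite mule_ge0 ?expeR_ge0 // lee_fin.
have mu01 x : 0 <= (1 - p x) ^+ n <= 1.
  have /andP[p0 p1] := p01 x.
  by rewrite exprn_ge0 ?exprn_ile1 ?subr_ge0 //; lra.
have pos x : 0 < 1 + c x * (1 - p x) ^+ n.
  have /andP[m0' _] := mu01 x.
  by apply: (lt_le_trans ltr01); rewrite lerDl mulr_ge0.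
set z := lam * (t - M) + \sum_(x <- Fs) ln (1 + c x * (1 - p x) ^+ n).
have Cz : C = expR z.
  rewrite /z expRD expR_sum /C; congr (_ * _); apply: eq_bigr => x _.
  by rewrite lnK // posrE.
rewrite /LG0 -/m.
apply: (@le_trans _ _ (lne C%:E)).
  rewrite lee_lne //; rewrite in_itv /= ?leey ?andbT //.
  by rewrite lee_fin Cz ltW // expR_gt0.
rewrite Cz (_ : (expR z)%:E = expeR z%:E) // expeRK.
have fb := @final_bound R T p g n p01 g_ge0 lam Fs lam_gt0 (p_sum_le _ uF).
apply: (le_trans _ (leeD fb (_ : ((lam * t)%:E <= e%:E)%E))); last first.
  rewrite lee_fin; have -> : e = lam * eps by rewrite /eps; field; rewrite lt0r_neq0.
  by rewrite ler_wpM2l // ltW.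
rewrite -EFinD lee_fin.
have hM : \sum_(x <- Fs) g (p x) * (1 - p x) ^+ n <= M.
  by rewrite -lee_fin -mM; exact: mF.
have hM' : lam * (\sum_(x <- Fs) g (p x) * (1 - p x) ^+ n) <= lam * M.
  by rewrite ler_wpM2l // ltW.
have hs : \sum_(x <- Fs) ln (1 + c x * (1 - p x) ^+ n) <=
   \sum_(x <- Fs) (lam * (g (p x) * (1 - p x) ^+ n) +
     (1 - p x) ^+ n * (1 - (1 - p x) ^+ n) * (expR (lam * g (p x)) - 1 - lam * g (p x))).
  apply: ler_sum => x _.
  have := @log_ineq R (lam * g (p x)) ((1 - p x) ^+ n) (mulr_ge0 (ltW lam_gt0) (gx0 x)) (mu01 x).
  rewrite /c; lra.
rewrite big_split /= -mulr_sumr in hs.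
rewrite /z; lra.
Qed.
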